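(* Let $(C,f,P,Q)$ be a postcritically finite quadratic morphism over a field $K$ of characteristic $\ne2$. Then its postcritical orbit $\Gamma=\{f^n(P),f^n(Q)\mid n\ge1\}$, together with the map $\tau\colon\Gamma\to\Gamma$ induced by $f$ and the distinguished elements $i_1:=f(P)$ and $j_1:=f(Q)$, is a finite mapping scheme.
   Context: A quadratic morphism over a field $K$ (of characteristic $\ne2$) is a quadruple $(C,f,P,Q)$ with $C\cong\mathbb{P}^1_K$, $f\colon C\to C$ a morphism of degree $2$, and $P,Q\in C(K)$ the points whose images are precisely the critical points of $f$ (where $df=0$). The postcritical orbit is $\{f^n(P),f^n(Q)\mid n\ge1\}$, and $f$ is postcritically finite if this set is finite. A finite mapping scheme is a quadruple $(\Gamma,\tau,i_1,j_1)$ consisting of a finite set $\Gamma$, a map $\tau\colon\Gamma\to\Gamma$ and two distinct elements $i_1,j_1\in\Gamma$ such that, writing $i_n:=\tau^{n-1}(i_1)$, $j_n:=\tau^{n-1}(j_1)$ for $n\ge2$: (a) $\Gamma=\{i_n,j_n\mid n\ge1\}$; (b) $|\tau^{-1}(\gamma)|\le2$ for all $\gamma\in\Gamma$; (c) $|\tau^{-1}(i_1)|\le1$ and $|\tau^{-1}(j_1)|\le1$. *)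

(* Defs.v *)
From HB Require Import structures.
From mathcomp Require Import all_boot all_order all_algebra.
Set Implicit Arguments. Unset Strict Implicit. Unset Printing Implicit Defensive.
Import Order.TTheory GRing.Theory Num.Theory.
Local Open Scope ring_scope.

Record qform (K : fieldType) := QForm { qa : K; qb : K; qc : K }.

Definition qeval (K : fieldType) (F : qform K) (x y : K) : K :=
  qa F * x ^+ 2 + qb F * x * y + qc F * y ^+ 2.
Definition qdx (K : fieldType) (F : qform K) (x y : K) : K := 2%:R * qa F * x + qb F * y.
Definition qdy (K : fieldType) (F : qform K) (x y : K) : K := qb F * x + 2%:R * qc F * y.

Definition qres (K : fieldType) (F G : qform K) : K :=
  (qa F * qc G - qa G * qc F) ^+ 2
  - (qa F * qb G - qa G * qb F) * (qb F * qc G - qb G * qc F).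

(* P^1(K): [Some x] is the point [x:1], [None] is the point [1:0] = infinity. *)
Definition P1 (K : fieldType) := option K.

Definition rep (K : fieldType) (p : P1 K) : K * K :=
  match p with Some x => (x, 1) | None => (1, 0) end.

Definition normalize (K : fieldType) (u v : K) : P1 K :=
  if v == 0 then None else Some (u / v).

Definition fmap (K : fieldType) (F G : qform K) (p : P1 K) : P1 K :=
  let: (x, y) := rep p in normalize (qeval F x y) (qeval G x y).

(* Jacobian determinant of (F,G) at a homogeneous representative;
   in characteristic <> 2 its zeros are exactly the points where df = 0. *)
Definition jac (K : fieldType) (F G : qform K) (p : P1 K) : K :=
  let: (x, y) := rep p in qdx F x y * qdy G x y - qdy F x y * qdx G x y.

Definition critical (K : fieldType) (F G : qform K) (p : P1 K) : Prop :=
  jac F G p = 0.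

(* (P^1, f = [F:G], P, Q) is a quadratic morphism: F, G coprime binary
   quadratic forms (nonzero resultant, so f has degree 2) and P, Q are
   precisely the (distinct) critical points of f. *)
Definition quadratic_morphism (K : fieldType) (F G : qform K) (P Q : P1 K) : Prop :=
  qres F G != 0 /\ P != Q /\ (forall p : P1 K, critical F G p <-> (p = P \/ p = Q)).

Definition postcritically_finite (K : fieldType) (F G : qform K) (P Q : P1 K) : Prop :=
  exists s : seq (P1 K), forall n : nat,
    iter n.+1 (fmap F G) P \in s /\ iter n.+1 (fmap F G) Q \in s.

(* Finite mapping scheme (Gamma, tau, i1, j1); Gamma finite = finType.
   i_n = tau^(n-1) i1, j_n = tau^(n-1) j1. *)
Definition finite_mapping_scheme (Gamma : finType) (tau : Gamma -> Gamma)
    (i1 j1 : Gamma) : Prop :=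
  [/\ i1 != j1,
      (forall g : Gamma, exists n : nat, g = iter n tau i1 \/ g = iter n tau j1),
      (forall g : Gamma, #|[set x | tau x == g]| <= 2)%N,
      (#|[set x | tau x == i1]| <= 1)%N &
      (#|[set x | tau x == j1]| <= 1)%N].

(* Main.v *)
Require Import Defs.
From mathcomp Require Import all_boot all_order all_algebra.
From mathcomp Require Import ring.
Set Implicit Arguments. Unset Strict Implicit. Unset Printing Implicit Defensive.
Import Order.TTheory GRing.Theory Num.Theory.
Local Open Scope ring_scope.

Section S.
Variable K : fieldType.
Implicit Types F G H : qform K.

Definition ev H (p : P1 K) := qeval H (rep p).1 (rep p).2.

Lemma fmapE F G p : fmap F G p = normalize (ev F p) (ev G p).
Proof. by case: p. Qed.

Lemma nocommon F G p : qres F G != 0 -> ev F p = 0 -> ev G p = 0 -> False.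
Proof.
move=> hr; case: p => [x|]; rewrite /ev /qeval /= => hF hG.
- have eF : qc F = (qa F * x ^+ 2 + qb F * x * 1 + qc F * 1 ^+ 2) - (qa F * x ^+ 2 + qb F * x) by ring.
  have eG : qc G = (qa G * x ^+ 2 + qb G * x * 1 + qc G * 1 ^+ 2) - (qa G * x ^+ 2 + qb G * x) by ring.
  rewrite hF sub0r in eF; rewrite hG sub0r in eG.
  move/eqP: hr; apply; rewrite /qres eF eG; ring.
- have eF : qa F = 0 by rewrite -hF; ring.
  have eG : qa G = 0 by rewrite -hG; ring.
  move/eqP: hr; apply; rewrite /qres eF eG; ring.
Qed.

Lemma normalize_eq (a b c d : K) : (a != 0 \/ b != 0) -> (c != 0 \/ d != 0) ->
  normalize a b = normalize c d <-> a * d - b * c = 0.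
Proof.
rewrite /normalize => hab hcd.
case: (eqVneq b 0) => [eb|hb]; case: (eqVneq d 0) => [ed|hd].
- by rewrite eb ed; split=> // _; rewrite mulr0 mul0r subr0.
- rewrite eb; split=> //; rewrite mul0r subr0 => /eqP; rewrite mulf_eq0 (negbTE hd) orbF.
  by case: hab => [/negbTE -> | /eqP].
- rewrite ed; split=> //; rewrite mulr0 sub0r => /eqP; rewrite oppr_eq0 mulf_eq0 (negbTE hb) /=.
  by case: hcd => [/negbTE -> | /eqP].
- split => [[e]|e].
  + have -> : a * d - b * c = (a / b - c / d) * (b * d) by field; rewrite ?hb ?hd.
    by rewrite e subrr mul0r.
  + congr Some; apply/eqP; rewrite -subr_eq0.
    have -> : a / b - c / d = (a * d - b * c) / (b * d) by field; rewrite ?hb ?hd.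
    by rewrite e mul0r.
Qed.

Definition pre F G p := QForm (ev G p * qa F - ev F p * qa G) (ev G p * qb F - ev F p * qb G)
  (ev G p * qc F - ev F p * qc G).

Lemma ev_pre F G p q : ev (pre F G p) q = ev G p * ev F q - ev F p * ev G q.
Proof. rewrite /pre /ev /qeval /=. ring. Qed.

Lemma nz F G p : qres F G != 0 -> ev F p != 0 \/ ev G p != 0.
Proof.
move=> hr; case: (eqVneq (ev F p) 0) => hF; last by left.
by right; apply/eqP => hG; exact: nocommon hr hF hG.
Qed.

Lemma fmap_eq_pre F G p x : qres F G != 0 ->
  fmap F G x = fmap F G p <-> ev (pre F G p) x = 0.
Proof.
move=> hr; rewrite !fmapE ev_pre normalize_eq; try exact: nz.
have -> : ev F x * ev G p - ev G x * ev F p = ev G p * ev F x - ev F p * ev G x by ring.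
by [].
Qed.

Lemma pre_nonzero F G p : qres F G != 0 ->
  ~ [/\ qa (pre F G p) = 0, qb (pre F G p) = 0 & qc (pre F G p) = 0].
Proof.
move=> hr; have := nz p hr; rewrite /=.
set c := ev F p; set d := ev G p => hcd [ha hb hc].
case: (eqVneq d 0) => hd.
- have hc0 : c != 0 by case: hcd => // /negP; rewrite hd eqxx.
  move: ha hb hc; rewrite hd !mul0r !sub0r => /eqP ha /eqP hb /eqP hc.
  rewrite oppr_eq0 mulf_eq0 (negbTE hc0) /= in ha.
  rewrite oppr_eq0 mulf_eq0 (negbTE hc0) /= in hb.
  rewrite oppr_eq0 mulf_eq0 (negbTE hc0) /= in hc.
  move/eqP: hr; apply; rewrite /qres (eqP ha) (eqP hb) (eqP hc); ring.
- have eaF : qa F = (d * qa F - c * qa G) / d + c * qa G / d by field; rewrite ?hb ?hd.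
  have ebF : qb F = (d * qb F - c * qb G) / d + c * qb G / d by field; rewrite ?hb ?hd.
  have ecF : qc F = (d * qc F - c * qc G) / d + c * qc G / d by field; rewrite ?hb ?hd.
  rewrite ha mul0r add0r in eaF; rewrite hb mul0r add0r in ebF; rewrite hc mul0r add0r in ecF.
  move/eqP: hr; apply; rewrite /qres eaF ebF ecF; ring.
Qed.

Definition nzf H := ~ [/\ qa H = 0, qb H = 0 & qc H = 0].

Lemma ev_fin H x : ev H (Some x) = qa H * x ^+ 2 + qb H * x + qc H.
Proof. rewrite /ev /qeval /=; ring. Qed.
Lemma ev_inf H : ev H None = qa H.
Proof. rewrite /ev /qeval /=; ring. Qed.

Lemma two_fin H x y : x != y -> ev H (Some x) = 0 -> ev H (Some y) = 0 ->
  qa H * (x + y) + qb H = 0.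
Proof.
rewrite !ev_fin => hxy ex ey.
have : (x - y) * (qa H * (x + y) + qb H) = 0.
  have -> : (x - y) * (qa H * (x + y) + qb H) =
    (qa H * x ^+ 2 + qb H * x + qc H) - (qa H * y ^+ 2 + qb H * y + qc H) by ring.
  by rewrite ex ey subrr.
by move/eqP; rewrite mulf_eq0 subr_eq0 (negbTE hxy) /= => /eqP.
Qed.

Lemma lin0 H x : qa H = 0 -> ev H (Some x) = 0 -> qb H * x + qc H = 0.
Proof. by rewrite ev_fin => ->; rewrite mul0r add0r. Qed.

Lemma three_roots H r1 r2 r3 : nzf H -> r1 != r2 -> r1 != r3 -> r2 != r3 ->
  ev H r1 = 0 -> ev H r2 = 0 -> ev H r3 = 0 -> False.
Proof.
move=> hH; case: r1 => [x|]; case: r2 => [y|]; case: r3 => [z|] //=;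
  rewrite ?(inj_eq (@Some_inj _)) => h12 h13 h23 e1 e2 e3.
- have a1 := two_fin h12 e1 e2; have a2 := two_fin h13 e1 e3.
  have ha : qa H = 0.
    have : qa H * (y - z) = 0.
      have -> : qa H * (y - z) = (qa H * (x + y) + qb H) - (qa H * (x + z) + qb H) by ring.
      by rewrite a1 a2 subrr.
    by move/eqP; rewrite mulf_eq0 subr_eq0 (negbTE h23) orbF => /eqP.
  have hb : qb H = 0 by rewrite -a1 ha; ring.
  apply: hH; split => //; move: e1; rewrite ev_fin ha hb; move=> <-; ring.
- rewrite ev_inf in e3; have a1 := two_fin h12 e1 e2.
  have hb : qb H = 0 by rewrite -a1 e3; ring.
  apply: hH; split => //; move: e1; rewrite ev_fin e3 hb; move=> <-; ring.
- rewrite ev_inf in e2; have a1 := two_fin h13 e1 e3.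
  have hb : qb H = 0 by rewrite -a1 e2; ring.
  apply: hH; split => //; move: e1; rewrite ev_fin e2 hb; move=> <-; ring.
- rewrite ev_inf in e1; have a1 := two_fin h23 e2 e3.
  have hb : qb H = 0 by rewrite -a1 e1; ring.
  apply: hH; split => //; move: e2; rewrite ev_fin e1 hb; move=> <-; ring.
Qed.

Lemma double_root H p q : (2%:R : K) != 0 -> nzf H ->
  qdx H (rep p).1 (rep p).2 = 0 -> qdy H (rep p).1 (rep p).2 = 0 ->
  ev H q = 0 -> q = p.
Proof.
move=> h2 hH; case: p => [p|]; rewrite /qdx /qdy /= => dx dy.
- have hc : 2%:R * qc H = - (qb H * p).
    have -> : 2%:R * qc H = - (qb H * p) + (qb H * p + 2%:R * qc H * 1) by ring.
    by rewrite dy addr0.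
  case: q => [q|] eq.
  + case: (eqVneq q p) => [->//|hqp]; exfalso.
    have e2 : 2%:R * qa H * (q - p) ^+ 2 = 0.
      have -> : 2%:R * qa H * (q - p) ^+ 2 = 2%:R * (qa H * q ^+ 2 + qb H * q + qc H)
         - (2%:R * qa H * p + qb H * 1) * (2%:R * q - p) - (qb H * p + 2%:R * qc H * 1) by ring.
      by rewrite -ev_fin eq dx dy; ring.
    have ha : qa H = 0.
      move/eqP: e2; rewrite -mulrA mulf_eq0 (negbTE h2) /= mulf_eq0 sqrf_eq0 subr_eq0 (negbTE hqp) orbF.
      by move/eqP.
    have hb : qb H = 0 by rewrite -dx ha; ring.
    apply: hH; split => //; apply/eqP; move/eqP: hc; rewrite hb mul0r oppr0 mulf_eq0 (negbTE h2) //.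
  + rewrite ev_inf in eq.
    have hb : qb H = 0 by rewrite -dx eq; ring.
    exfalso; apply: hH; split => //; apply/eqP; move/eqP: hc; rewrite hb mul0r oppr0 mulf_eq0 (negbTE h2) //.
- have ha : qa H = 0.
    have : 2%:R * qa H = 0 by rewrite -dx; ring.
    by move/eqP; rewrite mulf_eq0 (negbTE h2) => /eqP.
  have hb : qb H = 0 by rewrite -dy; ring.
  case: q => [q|] // eq; exfalso; apply: hH; split => //.
  by move: eq; rewrite ev_fin ha hb => <-; ring.
Qed.

Lemma half0 (x : K) : (2%:R : K) != 0 -> 2%:R * x = 0 -> x = 0.
Proof. by move=> h2 /eqP; rewrite mulf_eq0 (negbTE h2) => /eqP. Qed.

Lemma grad_pre F G p (h2 : (2%:R : K) != 0) : jac F G p = 0 ->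
  qdx (pre F G p) (rep p).1 (rep p).2 = 0 /\ qdy (pre F G p) (rep p).1 (rep p).2 = 0.
Proof.
case: p => [x|]; rewrite /jac /= => hj; split.
all: apply: (half0 h2).
all: rewrite /pre /ev /qdx /qdy /qeval /= in hj *.
- match goal with hj : ?J = 0 |- _ => transitivity (1 * J); [ring | by rewrite hj mulr0] end.
- match goal with hj : ?J = 0 |- _ => transitivity (- x * J); [ring | by rewrite hj mulr0] end.
- ring.
- match goal with hj : ?J = 0 |- _ => transitivity (- 1 * J); [ring | by rewrite hj mulr0] end.
Qed.

End S.
From Stdlib Require Import ClassicalEpsilon.
Definition asb (A : Prop) : bool := if excluded_middle_informative A then true else false.
Lemma asbP (A : Prop) : asb A <-> A.
Proof. rewrite /asb; case: excluded_middle_informative => //. Qed.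

Lemma crit_unique (K : fieldType) (F G : qform K) (P Q : P1 K) x :
  (2%:R : K) != 0 -> quadratic_morphism F G P Q ->
  fmap F G x = fmap F G P -> x = P.
Proof.
move=> h2 [hr [_ hc]] /(fmap_eq_pre _ _ hr) e.
have [dx dy] := grad_pre h2 (proj2 (hc P) (or_introl erefl)).
exact: double_root h2 (@pre_nonzero _ _ _ P hr) dx dy e.
Qed.

Lemma size_le2 (K : fieldType) (F G : qform K) y (l : seq (P1 K)) : qres F G != 0 ->
  uniq l -> (forall z, z \in l -> fmap F G z = fmap F G y) -> (size l <= 2)%N.
Proof.
move=> hr; case: l => [|a [|b [|c r]]] //= /and4P [ha hb hc _] hl.
exfalso.
have e z : z \in [:: a, b, c & r] -> ev (pre F G y) z = 0.
  by move=> /hl /(fmap_eq_pre _ _ hr).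
apply: (three_roots (@pre_nonzero _ _ _ y hr) _ _ _ (e a _) (e b _) (e c _));
  rewrite ?inE ?eqxx ?orbT //.
- by apply: contraNneq ha => ->; rewrite !inE eqxx.
- by apply: contraNneq ha => ->; rewrite !inE eqxx orbT.
- by apply: contraNneq hb => ->; rewrite !inE eqxx.
Qed.

Lemma size_le1 (T : eqType) (P : T) (l : seq T) :
  uniq l -> (forall z, z \in l -> z = P) -> (size l <= 1)%N.
Proof.
case: l => [|a [|b r]] //= /andP [ha _] hl.
by move: ha; rewrite (hl a) ?inE ?eqxx // (hl b) ?inE ?eqxx ?orbT.
Qed.

Theorem proposition2p2 (K : fieldType) (F G : qform K) (P Q : P1 K) :
  (2%:R : K) != 0 ->
  quadratic_morphism F G P Q ->
  postcritically_finite F G P Q ->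
  exists (Gamma : finType) (emb : Gamma -> P1 K) (tau : Gamma -> Gamma)
         (i1 j1 : Gamma),
    [/\ injective emb,
        (forall x : P1 K, (exists g : Gamma, emb g = x) <->
           (exists n : nat, x = iter n.+1 (fmap F G) P \/ x = iter n.+1 (fmap F G) Q)),
        (forall g : Gamma, emb (tau g) = fmap F G (emb g)),
        emb i1 = fmap F G P /\ emb j1 = fmap F G Q &
        finite_mapping_scheme tau i1 j1].
Proof.
move=> h2 hqm [s hs].
have hr : qres F G != 0 by case: hqm.
have hPQ : P != Q by case: hqm => _ [].
set f := fmap F G.
pose orb z := exists n, z = iter n.+1 f P \/ z = iter n.+1 f Q.
pose t := [seq z <- s | asb (orb z)].
have mem_t z : z \in t <-> orb z.
  rewrite mem_filter; split; first by case/andP => /asbP.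
  move=> hz; rewrite (proj2 (asbP _) hz) /=.
  by case: hz => n [->|->]; case: (hs n).
have orbf z : orb z -> orb (f z).
  by case=> n [->|->]; exists n.+1; [left|right].
have tau_mem (g : seq_sub t) : f (ssval g) \in t.
  by apply/mem_t/orbf/mem_t/ssvalP.
have hiP : f P \in t by apply/mem_t; exists 0%N; left.
have hiQ : f Q \in t by apply/mem_t; exists 0%N; right.
pose tau (g : seq_sub t) : seq_sub t := SeqSub (tau_mem g).
pose i1 : seq_sub t := SeqSub hiP.
pose j1 : seq_sub t := SeqSub hiQ.
have valI : injective (@ssval _ t) by move=> a b; apply: val_inj.
have iterI n : ssval (iter n tau i1) = iter n.+1 f P.
  by elim: n => // n IH; rewrite iterS /= IH.
have iterJ n : ssval (iter n tau j1) = iter n.+1 f Q.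
  by elim: n => // n IH; rewrite iterS /= IH.
have cnt (g : seq_sub t) (R : P1 K -> Prop) k :
    (forall x : seq_sub t, tau x = g -> R (ssval x)) ->
    (forall l : seq (P1 K), uniq l -> (forall z, z \in l -> R z) -> (size l <= k)%N) ->
    (#|[set x | tau x == g]| <= k)%N.
  move=> hR hk; rewrite cardE -(size_map (@ssval _ t)); apply: hk.
    by rewrite (map_inj_uniq valI) enum_uniq.
  move=> z /mapP [x]; rewrite mem_enum inE => /eqP /hR hx ->; exact: hx.
exists (seq_sub t : finType), (@ssval _ t), tau, i1, j1; split => //.
- move=> x; split.
    by case=> g <-; apply/mem_t/ssvalP.
  by move=> /mem_t hx; exists (SeqSub hx).
- split.
  + apply/eqP => e; have : f Q = f P by have := congr1 (@ssval _ t) e.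
    by move/(crit_unique h2 hqm) => eQP; move: hPQ; rewrite eQP eqxx.
  + move=> g; case/mem_t: (ssvalP g) => n [e|e]; exists n; [left|right];
      apply: valI; by rewrite ?iterI ?iterJ.
  + move=> g; case/mem_t: (ssvalP g) => n hn.
    have [y ey] : exists y, ssval g = f y by case: hn => ->; eexists; reflexivity.
    apply: (cnt g (fun z => f z = f y)).
      by move=> x ex; rewrite -ey -ex.
    by move=> l; apply: size_le2.
  + apply: (cnt i1 (fun z => z = P)); last by move=> l; apply: size_le1.
    by move=> x ex; apply: (crit_unique h2 hqm); rewrite -[fmap F G P]/(ssval i1) -ex.
  + have hqm' : quadratic_morphism F G Q P.
      case: hqm => a [b c]; split => //; split; first by rewrite eq_sym.
      by move=> p; rewrite c; tauto.
    apply: (cnt j1 (fun z => z = Q)); last by move=> l; apply: size_le1.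
    by move=> x ex; apply: (crit_unique h2 hqm'); rewrite -[fmap F G Q]/(ssval j1) -ex.
Qed.
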